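(* Let $R$ be a finite Frobenius ring and $M=\{x_0=0,x_1,\ldots,x_n\}$ a finite $R$-bimodule. Then all matrices of the form $[\chi(B(x_i,x_j))]_{0\le i,j\le n}$, where $\chi$ ranges over generating characters of $R$ and $B$ over non-degenerate bilinear forms on $M$, are equivalent to one another.
   Context: A bilinear form on $M$ is a biadditive map $B:M\times M\to R$ with $B(rx,y)=rB(x,y)$ and $B(x,yr)=B(x,y)r$; it is non-degenerate if its left and right kernels are zero. A character of $R$ is a group homomorphism $(R,+)\to\mathbb{C}^*$; it is generating if its kernel contains no nonzero left ideal and no nonzero right ideal of $R$. Two matrices with root-of-unity entries are equivalent if one is obtained from the other by permuting rows and columns and multiplying rows and columns by roots of unity. *)

(* Defs.v *)
From HB Require Import structures.
From mathcomp Require Import all_boot all_order all_algebra all_fingroup.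
From mathcomp Require Import algC.
Set Implicit Arguments. Unset Strict Implicit. Unset Printing Implicit Defensive.
Import GRing.Theory.
Local Open Scope ring_scope.

(* Complex numbers are modelled by algC (every character of a
   finite abelian group takes values in roots of unity, which lie in algC). *)

Section Defs.
Variable R : finNzRingType.

Definition is_character (chi : R -> algC) : Prop :=
  (forall a, chi a != 0) /\ (forall a b, chi (a + b) = chi a * chi b).

Definition is_left_ideal (I : {set R}) : Prop :=
  0 \in I /\ (forall a b, a \in I -> b \in I -> a - b \in I) /\
  (forall r a, a \in I -> r * a \in I).

Definition is_right_ideal (I : {set R}) : Prop :=
  0 \in I /\ (forall a b, a \in I -> b \in I -> a - b \in I) /\
  (forall r a, a \in I -> a * r \in I).

Definition generating_character (chi : R -> algC) : Prop :=
  is_character chi /\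
  (forall I : {set R}, is_left_ideal I -> (forall a, a \in I -> chi a = 1) ->
     I = [set 0]) /\
  (forall I : {set R}, is_right_ideal I -> (forall a, a \in I -> chi a = 1) ->
     I = [set 0]).

(* A finite ring is Frobenius iff it admits a generating character (Wood). *)
Definition finite_Frobenius : Prop := exists chi, generating_character chi.

Variable M : finZmodType.

Definition is_bimodule (lact : R -> M -> M) (ract : M -> R -> M) : Prop :=
  (forall r x y, lact r (x + y) = lact r x + lact r y) /\
  (forall r s x, lact (r + s) x = lact r x + lact s x) /\
  (forall r s x, lact (r * s) x = lact r (lact s x)) /\
  (forall x, lact 1 x = x) /\
  (forall r x y, ract (x + y) r = ract x r + ract y r) /\
  (forall r s x, ract x (r + s) = ract x r + ract x s) /\
  (forall r s x, ract x (r * s) = ract (ract x r) s) /\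
  (forall x, ract x 1 = x) /\
  (forall r s x, ract (lact r x) s = lact r (ract x s)).

Definition bimod_bilinear_form (lact : R -> M -> M) (ract : M -> R -> M)
  (B : M -> M -> R) : Prop :=
  [/\ (forall x y z, B (x + y) z = B x z + B y z),
      (forall x y z, B x (y + z) = B x y + B x z),
      (forall r x y, B (lact r x) y = r * B x y) &
      (forall r x y, B x (ract y r) = B x y * r)].

Definition bimod_nondegenerate (B : M -> M -> R) : Prop :=
  (forall x, (forall y, B x y = 0) -> x = 0) /\
  (forall y, (forall x, B x y = 0) -> y = 0).

End Defs.

Definition root_of_unity (z : algC) : Prop := exists2 n : nat, (0 < n)%N & z ^+ n = 1.

(* Matrices with rows and columns indexed by the finite set M = {x_0 = 0, ..., x_n}. *)
Definition mx_equivalent (M : finType) (H1 H2 : M -> M -> algC) : Prop :=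
  exists (s t : {perm M}) (a b : M -> algC),
    (forall i, root_of_unity (a i)) /\ (forall j, root_of_unity (b j)) /\
    (forall i j, H2 i j = a i * b j * H1 (s i) (t j)).

Definition char_form_matrix (R : finNzRingType) (M : finType)
  (chi : R -> algC) (B : M -> M -> R) : M -> M -> algC :=
  fun x y => chi (B x y).

(* Main.v *)
Require Import Defs.
From HB Require Import structures.
From mathcomp Require Import all_boot all_order all_algebra all_fingroup.
From mathcomp Require Import algC.
Set Implicit Arguments. Unset Strict Implicit. Unset Printing Implicit Defensive.
Import GRing.Theory Num.Theory.
Local Open Scope ring_scope.

Section Helpers.
Variable R : finNzRingType.

Lemma char0 (chi : R -> algC) : is_character chi -> chi 0 = 1.
Proof.
case=> nz mul; apply: (mulfI (nz 0)); by rewrite -mul addr0 mulr1.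
Qed.

Lemma charN (chi : R -> algC) a : is_character chi -> chi (- a) * chi a = 1.
Proof. move=> hc; case: (hc) => _ mul; by rewrite -mul addNr char0. Qed.

Lemma sum_char (M : finZmodType) (psi : M -> algC) :
  (forall a b, psi (a + b) = psi a * psi b) -> forall z, psi z != 1 ->
  \sum_y psi y = 0.
Proof.
move=> mul z hz.
have E : \sum_y psi y = psi z * \sum_y psi y.
  rewrite mulr_sumr (reindex_inj (addrI z)) /=.
  by apply: eq_bigr => y _; rewrite mul.
have : (1 - psi z) * \sum_y psi y = 0 by rewrite mulrBl mul1r -E subrr.
by move/eqP; rewrite mulf_eq0 subr_eq0 eq_sym (negbTE hz) /= => /eqP.
Qed.

Variable M : finZmodType.
Variables (lact : R -> M -> M) (ract : M -> R -> M).

Lemma Bx0 B x : bimod_bilinear_form lact ract B -> B x 0 = 0.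
Proof.
case=> _ h2 _ _; apply: (addIr (B x 0)); by rewrite add0r -h2 addr0.
Qed.
Lemma B0y B y : bimod_bilinear_form lact ract B -> B 0 y = 0.
Proof.
case=> h1 _ _ _; apply: (addIr (B 0 y)); by rewrite add0r -h1 addr0.
Qed.
Lemma BxN B x y : bimod_bilinear_form lact ract B -> B x (- y) = - B x y.
Proof.
move=> hB; case: (hB) => _ h2 _ _; apply: (addrI (B x y)).
by rewrite -h2 !subrr Bx0.
Qed.
Lemma BNy B x y : bimod_bilinear_form lact ract B -> B (- x) y = - B x y.
Proof.
move=> hB; case: (hB) => h1 _ _ _; apply: (addrI (B x y)).
by rewrite -h1 !subrr B0y.
Qed.

Lemma right_ker (chi : R -> algC) B x :
  generating_character chi -> bimod_bilinear_form lact ract B ->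
  bimod_nondegenerate B -> (forall y, chi (B x y) = 1) -> x = 0.
Proof.
move=> [_ [_ hr]] hB [nl _] h.
pose I := [set B x y | y in M].
have HI : I = [set 0].
  apply: hr.
  - split; first by apply/imsetP; exists 0 => //; rewrite Bx0.
    split.
    + move=> a b /imsetP [y1 _ ->] /imsetP [y2 _ ->]; apply/imsetP.
      exists (y1 - y2) => //; case: (hB) => _ h2 _ _; by rewrite h2 BxN.
    + move=> r a /imsetP [y1 _ ->]; apply/imsetP; exists (ract y1 r) => //.
      by case: hB => _ _ _ ->.
  - by move=> a /imsetP [y _ ->].
apply: nl => y; have : B x y \in I by apply/imsetP; exists y.
by rewrite HI inE => /eqP.
Qed.

Lemma left_ker (chi : R -> algC) B y :
  generating_character chi -> bimod_bilinear_form lact ract B ->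
  bimod_nondegenerate B -> (forall x, chi (B x y) = 1) -> y = 0.
Proof.
move=> [_ [hl _]] hB [_ nr] h.
pose I := [set B x y | x in M].
have HI : I = [set 0].
  apply: hl.
  - split; first by apply/imsetP; exists 0 => //; rewrite B0y.
    split.
    + move=> a b /imsetP [y1 _ ->] /imsetP [y2 _ ->]; apply/imsetP.
      exists (y1 - y2) => //; case: (hB) => h1 _ _ _; by rewrite h1 BNy.
    + move=> r a /imsetP [y1 _ ->]; apply/imsetP; exists (lact r y1) => //.
      by case: hB => _ _ -> _.
  - by move=> a /imsetP [x _ ->].
apply: nr => x; have : B x y \in I by apply/imsetP; exists x.
by rewrite HI inE => /eqP.
Qed.

End Helpers.

Theorem propositionA5 (R : finNzRingType) (M : finZmodType)
  (lact : R -> M -> M) (ract : M -> R -> M) :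
  finite_Frobenius R -> is_bimodule lact ract ->
  forall (chi1 chi2 : R -> algC) (B1 B2 : M -> M -> R),
    generating_character chi1 -> generating_character chi2 ->
    bimod_bilinear_form lact ract B1 -> bimod_nondegenerate B1 ->
    bimod_bilinear_form lact ract B2 -> bimod_nondegenerate B2 ->
    mx_equivalent (char_form_matrix chi1 B1) (char_form_matrix chi2 B2).
Proof.
move=> _ _ chi1 chi2 B1 B2 g1 g2 hB1 nd1 hB2 nd2.
have c1 := g1.1; have c2 := g2.1.
have ex : forall x, exists x', [forall y, chi2 (B2 x y) == chi1 (B1 x' y)].
  move=> x; apply/existsP; apply: contraT => /existsPn hn.
  pose S := \sum_(x' : M) \sum_(y : M) chi2 (B2 x y) * chi1 (B1 (- x') y).
  have S0 : S = 0.
    apply: big1 => x' _; have /forallPn [y hy] := hn x'.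
    apply: (@sum_char _ (fun y => chi2 (B2 x y) * chi1 (B1 (- x') y)) _ y).
      move=> a b; case: hB1 => _ h1 _ _; case: hB2 => _ h2 _ _.
      by rewrite h1 h2 c1.2 c2.2 mulrACA.
    apply: contra hy => /eqP e; apply/eqP.
    by rewrite -[LHS]mulr1 -(charN (B1 x' y) c1) mulrA -(BNy _ _ hB1) e mul1r.
  have : S = #|M|%:R.
    rewrite /S exchange_big (bigD1 (0:M)) //= [X in _ + X]big1 ?addr0; last first.
      move=> y hy; rewrite -mulr_sumr.
      have [z hz] : exists z, chi1 (B1 (- z) y) != 1.
        apply/existsP; apply: contraT => /existsPn hn2.
        suff y0 : y = 0 by rewrite y0 eqxx in hy.
        apply: (left_ker g1 hB1 nd1) => z.
        by have := hn2 (- z); rewrite opprK negbK => /eqP.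
      rewrite (@sum_char _ (fun x' => chi1 (B1 (- x') y)) _ z hz) ?mulr0 //.
      move=> a b; case: hB1 => h1 _ _ _; by rewrite opprD h1 c1.2.
    rewrite -mulr_sumr (Bx0 _ hB2) char0 // mul1r -sumr_const; apply: eq_bigr => x' _.
    by rewrite (Bx0 _ hB1) char0.
  rewrite S0 => /eqP; rewrite eq_sym pnatr_eq0 => /eqP h.
  by move: (card0_eq h 0); rewrite inE.
pose f x := xchoose (ex x).
have fP x y : chi2 (B2 x y) = chi1 (B1 (f x) y).
  by have /forallP/(_ y)/eqP := xchooseP (ex x).
have finj : injective f.
  move=> x1 x2 e; apply/eqP; rewrite -subr_eq0; apply/eqP.
  apply: (right_ker g2 hB2 nd2) => y.
  case: (hB2) => h1 _ _ _; rewrite h1 c2.2 (BNy _ _ hB2) mulrC.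
  by rewrite (fP x1) e -fP charN.
exists (perm finj), (1%g : {perm M}), (fun _ => 1), (fun _ => 1).
split; first by move=> _; exists 1%N.
split; first by move=> _; exists 1%N.
by move=> i j; rewrite /char_form_matrix permE perm1 !mul1r fP.
Qed.
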